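(* Let $n\in\mathbb N$ and $b=n^2+1$. Then for every $m\in\{2,3,\dots,n\}$, the number $(m\cdot n)^2$ is antipalindromic in base $b$.
   Context: For an integer $b\ge 2$, every natural number $x$ has a unique base-$b$ expansion $x=a_\ell b^\ell+\dots+a_1b+a_0$ with $a_0,\dots,a_\ell\in\{0,1,\dots,b-1\}$ and $a_\ell\neq 0$. The number $x$ is antipalindromic in base $b$ if $a_j=b-1-a_{\ell-j}$ for all $j\in\{0,1,\dots,\ell\}$. *)

(* Defs.v *)
From mathcomp Require Import all_boot.
Set Implicit Arguments. Unset Strict Implicit. Unset Printing Implicit Defensive.

Definition base_expansion (b x : nat) (a : seq nat) : Prop :=
  [/\ size a > 0,
      all (fun d => d < b) a,
      nth 0 a (size a).-1 != 0 &
      x = \sum_(j < size a) nth 0 a j * b ^ j].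

Definition antipalindromic (b x : nat) : Prop :=
  exists a : seq nat, base_expansion b x a /\
    forall j, j <= (size a).-1 ->
      nth 0 a j = b - 1 - nth 0 a ((size a).-1 - j).

(* Main.v *)
Require Import Defs.
From mathcomp Require Import all_boot.
From mathcomp Require Import zify.

Theorem mainTheorem10 (n : nat) :
  forall m : nat, 2 <= m <= n -> antipalindromic (n ^ 2 + 1) ((m * n) ^ 2).
Proof.
move=> m /andP[h2 hn].
have hMN : m ^ 2 <= n ^ 2 by rewrite leq_exp2r.
have hM4 : 4 <= m ^ 2 by rewrite -[4]/(2 ^ 2) leq_exp2r.
exists [:: n ^ 2 + 1 - m ^ 2; m ^ 2 - 1]; split.
  split => //=.
  - rewrite !andbT; apply/andP; split; lia.
  - lia.
  - rewrite big_ord_recr big_ord_recr big_ord0 /= expnMn.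
    move: hMN hM4; set M := m ^ 2; set N := n ^ 2 => hMN hM4.
    rewrite expn1 expn0; nia.
move=> j /=; case: j => [|[|j]] //= _; lia.
Qed.
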